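(* For every integer $n\ge 0$, \[ \sum_{k=0}^{n}\Big(-\frac{1}{4}\Big)^k\binom{n}{k}\binom{2k}{k}\,k\,H_{2k} =\frac{n}{(1-2n)2^{1+2n}}\binom{2n}{n}\Big\{3H_n-4H_{2n}-\frac{2+4n}{1-2n}\Big\}. \]
   Context: For an integer $m\ge 0$, $H_m$ denotes the $m$-th harmonic number: $H_0=0$ and $H_m=\sum_{j=1}^m \frac1j$ for $m\ge1$. $\binom{n}{k}$ is the usual binomial coefficient. *)

(* Defs.v *)
From HB Require Import structures.
From mathcomp Require Import all_boot all_order all_algebra.
Set Implicit Arguments. Unset Strict Implicit. Unset Printing Implicit Defensive.
Import Order.TTheory GRing.Theory Num.Theory.
Local Open Scope ring_scope.

Definition harmonic (m : nat) : rat := \sum_(1 <= j < m.+1) (j%:R)^-1.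

(* Main.v *)
Require Import Defs.
From HB Require Import structures.
From mathcomp Require Import all_boot all_order all_algebra.
From mathcomp Require Import ring lra zify.
Import Order.TTheory GRing.Theory Num.Theory.
Local Open Scope ring_scope.

Lemma harmonicS m : harmonic m.+1 = harmonic m + (m%:R + 1)^-1.
Proof. by rewrite /harmonic big_nat_recr //= natr1. Qed.

Lemma cbinS k : (k.+1 * 'C(2 * k.+1, k.+1) = 2 * (2 * k).+1 * 'C(2 * k, k))%N.
Proof.
have h1 := mul_bin_diag (2 * k).+1 k. rewrite /= in h1.
have h2 : 'C((2*k).+1, k) = 'C((2*k).+1, k.+1).
  have hk : (k <= (2*k).+1)%N by lia.
  rewrite -(bin_sub hk). congr 'C(_, _). lia.
have -> : (2 * k.+1 = (2*k).+2)%N by lia.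
rewrite binS -h2 -mulnA h1. lia.
Qed.

Definition a (k : nat) : rat := (- (1/4)) ^+ k * ('C(2 * k, k))%:R.

Lemma natn_neq0 (m : nat) : (m%:R + 1 : rat) != 0.
Proof. by rewrite natr1 pnatr_eq0. Qed.

Lemma aS k : a k.+1 = a k * (- (2 * k%:R + 1) / (2 * (k%:R + 1))).
Proof.
rewrite /a exprS.
have e := cbinS k. move/(congr1 (fun x => x%:R : rat)): e.
move=> /= e. rewrite !natrM -[(k.+1)%:R]natr1 -[((2*k).+1)%:R]natr1 natrM in e.
have nz := natn_neq0 k.
have -> : ('C(2 * k.+1, k.+1))%:R = 2 * (2 * k%:R + 1) * ('C(2 * k, k))%:R / (k%:R + 1) :> rat.
  by rewrite -e; field.
by field.
Qed.

Lemma a0 : a 0 = 1.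
Proof. by rewrite /a expr0 mul1r bin0. Qed.

Lemma binrel n j : (j%:R + 1) * ('C(n, j.+1))%:R = (n%:R - j%:R) * ('C(n, j))%:R :> rat.
Proof.
case: (leqP j n) => hj.
  have := mul_bin_left n j. move/(congr1 (fun x => x%:R : rat)).
  by rewrite /= !natrM natrB // natr1.
by rewrite !bin_small // ?mulr0 // ltnW.
Qed.

Lemma harm2 k : harmonic (2 * k.+1) = harmonic (2 * k) + (2 * k%:R + 1)^-1 + (2 * k%:R + 2)^-1.
Proof.
have -> : (2 * k.+1 = (2 * k).+2)%N by lia.
rewrite !harmonicS -natr1 natrM addrA. congr (_ + _ + (_ ^-1)).
Qed.

Lemma natS' (m : nat) : (m.+1)%:R = m%:R + 1 :> rat.
Proof. by rewrite natr1. Qed.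

Definition t n k : rat := ('C(n, k))%:R * a k.

Definition Gp n k : rat := match k with 0 => 0 | j.+1 => ('C(n, j))%:R * a k * (-2 * k%:R) end.

Lemma A_step n k : (2*n%:R+2) * t n.+1 k - (2*n%:R+1) * t n k = Gp n k.+1 - Gp n k.
Proof.
case: k => [|j].
  by rewrite /t /Gp !bin0 (aS 0) a0; field.
rewrite /t /Gp (binS n j) natrD (aS j.+1).
have e := binrel n j.
have nz := natn_neq0 j.
have -> : ('C(n, j.+1))%:R = (n%:R - j%:R) * ('C(n, j))%:R / (j%:R + 1) :> rat.
  by rewrite -e; field.
rewrite !natS'.
have nz2 := natn_neq0 j.+1. rewrite natS' in nz2.
by field; rewrite nz nz2.
Qed.

Definition Asum n := \sum_(0 <= k < n.+1) t n k.

Lemma sum_ext (f : nat -> rat) n : f n.+1 = 0 -> \sum_(0 <= k < n.+2) f k = \sum_(0 <= k < n.+1) f k.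
Proof. by move=> h; rewrite big_nat_recr //= h addr0. Qed.

Lemma t_out n : t n n.+1 = 0.
Proof. by rewrite /t bin_small // mul0r. Qed.

Lemma A_rec n : (2*n%:R+2) * Asum n.+1 = (2*n%:R+1) * Asum n.
Proof.
apply/eqP; rewrite -subr_eq0; apply/eqP.
rewrite /Asum -(sum_ext (t n)) ?t_out // !mulr_sumr -sumrB.
rewrite (telescope_sumr_eq (Gp n)) //; last by move=> k _; apply: A_step.
by rewrite /= bin_small // !mul0r subr0.
Qed.

Lemma A_closed n : Asum n = ('C(2 * n, n))%:R / 4 ^+ n.
Proof.
elim: n => [|n IH].
  by rewrite /Asum big_nat1 /t a0 bin0 expr0 divr1.
have nz : (2 * n%:R + 2 : rat) != 0.
  by apply: lt0r_neq0; have := ler0n rat n; lra.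
have -> : Asum n.+1 = (2*n%:R+1) * Asum n / (2*n%:R+2).
  by rewrite -A_rec; field.
rewrite IH.
have e := cbinS n. move/(congr1 (fun x => x%:R : rat)): e.
move=> /= e. rewrite !natrM -[(n.+1)%:R]natr1 -[((2*n).+1)%:R]natr1 natrM in e.
have nz1 := natn_neq0 n.
have -> : ('C(2 * n.+1, n.+1))%:R = 2 * (2 * n%:R + 1) * ('C(2 * n, n))%:R / (n%:R + 1) :> rat.
  by rewrite -e; field.
rewrite exprS.
by field; rewrite nz nz1 expf_neq0.
Qed.

Definition Fk n k : rat := ('C(n, k))%:R * a k * k%:R * harmonic (2 * k).
Definition rho n : rat := n%:R * (2 * n%:R + 5) / ((n%:R + 1) * (2 * n%:R - 1)).
Definition Qq n (K : rat) : rat :=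
  -2 + 2 * (4 * n%:R ^+ 2 + 10 * n%:R + 3) / ((n%:R + 1) * (2 * n%:R - 1)) * K
  - 8 / (2 * n%:R - 1) * K ^+ 2.
Definition Gm n k : rat := match k with 0 => 0 | j.+1 =>
  ('C(n, j))%:R * a k * (4 * k%:R * (1 - k%:R) * harmonic (2 * k) + Qq n k%:R) end.

Lemma nz2n1 n : (2 * n%:R - 1 : rat) != 0.
Proof.
case: n => [|m]; first by rewrite mulr0 sub0r oppr_eq0 oner_eq0.
apply: lt0r_neq0; rewrite natS'; have := ler0n rat m; lra.
Qed.

Lemma main_step n k : 4 * n%:R * Fk n.+1 k + 2 * (1 - 2 * n%:R) * Fk n k - rho n * t n k
   = Gm n k.+1 - Gm n k.
Proof.
have h1 := nz2n1 n. have h2 := natn_neq0 n.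
case: k => [|j].
  rewrite /Fk /t /Gm /rho /Qq !bin0 (aS 0) a0 !mulr0 !mul0r subr0.
  by field; rewrite h1 h2.
rewrite /Fk /t /Gm (binS n j) natrD (aS j.+1) (harm2 j.+1).
have e := binrel n j.
have nz := natn_neq0 j.
have -> : ('C(n, j.+1))%:R = (n%:R - j%:R) * ('C(n, j))%:R / (j%:R + 1) :> rat.
  by rewrite -e; field.
rewrite !natS'.
have nz2 := natn_neq0 j.+1. rewrite natS' in nz2.
rewrite /Qq /rho.
have p1 : (2*(j%:R+1)+2 : rat) != 0 by apply: lt0r_neq0; have := ler0n rat j; lra.
have p2 : (2*(j%:R+1)+1 : rat) != 0 by apply: lt0r_neq0; have := ler0n rat j; lra.
by field; rewrite h1 h2 p1 p2 nz nz2.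
Qed.

Definition Ssum n := \sum_(0 <= k < n.+1) Fk n k.

Lemma Fk_out n : Fk n n.+1 = 0.
Proof. by rewrite /Fk bin_small // !mul0r. Qed.

Lemma S_rec n : 4 * n%:R * Ssum n.+1 + 2 * (1 - 2 * n%:R) * Ssum n - rho n * Asum n = 0.
Proof.
rewrite /Ssum /Asum -(sum_ext (Fk n)) ?Fk_out // -(sum_ext (t n)) ?t_out //.
rewrite !mulr_sumr -big_split /= -sumrB.
rewrite (telescope_sumr_eq (Gm n)) //; last by move=> k _; apply: main_step.
by rewrite /= bin_small // !mul0r subr0.
Qed.

Definition fcl n : rat := n%:R / ((1 - 2 * n%:R) * 2 ^+ (1 + 2 * n)) * ('C(2 * n, n))%:R *
    (3 * harmonic n - 4 * harmonic (2 * n) - (2 + 4 * n%:R) / (1 - 2 * n%:R)).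

Lemma S1 : Ssum 1 = fcl 1.
Proof.
rewrite /Ssum /fcl big_nat_recr //= big_nat1 /Fk.
rewrite /a.
have -> : (2 * 1 = 2)%N by []. have -> : (2 * 0 = 0)%N by [].
rewrite (harmonicS 1) (harmonicS 0) /harmonic big_geq // bin0 bin1 binn expr0 expr1.
Qed.

Lemma S_closed n : Ssum n = fcl n.
Proof.
elim: n => [|n IH].
  by rewrite /Ssum /fcl big_nat1 /Fk mulr0 mul0r !mul0r.
case: n IH => [|n] IH; first exact: S1.
set m := n.+1 in IH *.
have hm : (m%:R : rat) != 0 by rewrite pnatr_eq0.
have hr := S_rec m.
have -> : Ssum m.+1 = (rho m * Asum m - 2 * (1 - 2 * m%:R) * Ssum m) / (4 * m%:R).
  have hS : 4 * m%:R * Ssum m.+1 = rho m * Asum m - 2 * (1 - 2 * m%:R) * Ssum m.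
    by apply/eqP; rewrite -subr_eq0; apply/eqP; rewrite -hr; ring.
  by rewrite -hS; field.
rewrite IH A_closed /rho /fcl.
have e := cbinS m. move/(congr1 (fun x => x%:R : rat)): e.
move=> /= e. rewrite !natrM -[(m.+1)%:R]natr1 -[((2 * m).+1)%:R]natr1 natrM in e.
have nz1 := natn_neq0 m.
have -> : ('C(2 * m.+1, m.+1))%:R = 2 * (2 * m%:R + 1) * ('C(2 * m, m))%:R / (m%:R + 1) :> rat.
  by rewrite -e; field.
rewrite (harm2 m) (harmonicS m) natS'.
have -> : (2:rat) ^+ (1 + 2 * m.+1) = 2 ^+ (1 + 2 * m) * 4.
  have -> : (1 + 2 * m.+1 = (1 + 2 * m).+2)%N by lia.
  by rewrite !exprS; ring.
have -> : (2:rat) ^+ (1 + 2 * m) = 2 * 4 ^+ m.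
  by rewrite exprD expr1 exprM.
have h1 := nz2n1 m.
have h3 : (1 - 2 * m%:R : rat) != 0 by rewrite -oppr_eq0 opprB.
have h4 : (1 - 2 * (m%:R + 1) : rat) != 0 by apply: ltr0_neq0; have := ler0n rat m; lra.
have h5 : (1 - 2 * (1 + m%:R) : rat) != 0 by apply: ltr0_neq0; have := ler0n rat m; lra.
have h6 : (2 * m%:R + 2 : rat) != 0 by apply: lt0r_neq0; have := ler0n rat m; lra.
have h7 : (2 * m%:R + 1 : rat) != 0 by apply: lt0r_neq0; have := ler0n rat m; lra.
by field; rewrite h1 h3 h5 h6 h7 nz1 hm expf_neq0.
Qed.

Theorem theorem8 (n : nat) :
  \sum_(0 <= k < n.+1)
     (- (1 / 4 : rat)) ^+ k * ('C(n, k))%:R * ('C(2 * k, k))%:R * k%:R * harmonic (2 * k)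
  = n%:R / ((1 - 2 * n%:R) * 2 ^+ (1 + 2 * n)) * ('C(2 * n, n))%:R *
    (3 * harmonic n - 4 * harmonic (2 * n) - (2 + 4 * n%:R) / (1 - 2 * n%:R)).
Proof.
rewrite -/(fcl n) -S_closed /Ssum.
apply: eq_bigr => k _; rewrite /Fk /a; ring.
Qed.
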